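(* (1) For every $n\ge1$, $(\mathcal{Q}_n,\le)$ is a lattice. (2) For every $n\ge3$, $(\mathcal{P}_n,\le)$ is not a lattice. (3) For every $n\ge4$, $\mathcal{Q}_n\setminus\mathcal{P}_n$ with the induced order is not a lattice.
   Context: Fix $n\ge1$, $L_n=\{0,1,\dots,n\}$. A discrete quasi-copula is a map $Q:L_n\times L_n\to[0,n]$ such that (Q1) $Q(i,0)=Q(0,i)=0$ and $Q(i,n)=Q(n,i)=i$ for all $i\in L_n$; (Q2) $Q$ is non-decreasing in each argument; (Q3) $Q(i,j)+Q(i',j')\ge Q(i,j')+Q(i',j)$ for all $i\le i'$, $j\le j'$ in $L_n$ such that at least one of $i,i',j,j'$ is $0$ or $n$. A discrete copula is a map satisfying (Q1) and the 2-increasing inequality $Q(i,j)+Q(i',j')\ge Q(i,j')+Q(i',j)$ for all $i\le i'$, $j\le j'$ in $L_n$. Such a map is irreducible if its range is exactly $L_n$. $\mathcal{Q}_n$ (resp. $\mathcal{P}_n$) is the set of irreducible discrete quasi-copulas (resp. copulas) on $L_n$, ordered by the concordance order $P\le Q$ iff $P(i,j)\le Q(i,j)$ for all $i,j\in L_n$; $\mathcal{P}_n\subseteq\mathcal{Q}_n$ and subsets carry the induced order. *)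

(* Defs.v *)
From mathcomp Require Import all_boot.
Set Implicit Arguments. Unset Strict Implicit. Unset Printing Implicit Defensive.

(* A map L_n x L_n -> N, with L_n = {0,...,n} represented by 'I_n.+1.
   Irreducible discrete (quasi-)copulas take values in L_n, so natural-number
   values lose nothing. *)
Definition dmap (n : nat) := {ffun 'I_n.+1 * 'I_n.+1 -> nat}.

Definition dle (n : nat) (P Q : dmap n) : Prop :=
  forall i j : 'I_n.+1, P (i, j) <= Q (i, j).

Definition is_border (n : nat) (i : 'I_n.+1) : bool := (val i == 0) || (val i == n).

Definition boundary (n : nat) (Q : dmap n) : Prop :=
  (forall i j : 'I_n.+1, Q (i, j) <= n) /\
  (forall i : 'I_n.+1,
     [/\ Q (i, ord0) = 0, Q (ord0, i) = 0, Q (i, ord_max) = val i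
       & Q (ord_max, i) = val i]).

Definition discrete_quasi_copula (n : nat) (Q : dmap n) : Prop :=
  [/\ boundary Q,
      (forall i i' j : 'I_n.+1, i <= i' -> Q (i, j) <= Q (i', j)),
      (forall i j j' : 'I_n.+1, j <= j' -> Q (i, j) <= Q (i, j')) &
      (forall i i' j j' : 'I_n.+1, i <= i' -> j <= j' ->
         [|| is_border i, is_border i', is_border j | is_border j'] ->
         Q (i, j') + Q (i', j) <= Q (i, j) + Q (i', j'))].

Definition discrete_copula (n : nat) (Q : dmap n) : Prop :=
  boundary Q /\
  (forall i i' j j' : 'I_n.+1, i <= i' -> j <= j' ->
     Q (i, j') + Q (i', j) <= Q (i, j) + Q (i', j')).

Definition irreducible (n : nat) (Q : dmap n) : Prop :=
  (forall i j : 'I_n.+1, Q (i, j) <= n) /\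
  (forall k, k <= n -> exists i j : 'I_n.+1, Q (i, j) = k).

Definition Qset (n : nat) (Q : dmap n) : Prop := discrete_quasi_copula Q /\ irreducible Q.
Definition Pset (n : nat) (Q : dmap n) : Prop := discrete_copula Q /\ irreducible Q.

Definition is_lub (T : Type) (le : T -> T -> Prop) (S : T -> Prop) (x y z : T) :=
  [/\ S z, le x z, le y z & forall w, S w -> le x w -> le y w -> le z w].
Definition is_glb (T : Type) (le : T -> T -> Prop) (S : T -> Prop) (x y z : T) :=
  [/\ S z, le z x, le z y & forall w, S w -> le w x -> le w y -> le w z].
Definition is_lattice (T : Type) (le : T -> T -> Prop) (S : T -> Prop) : Prop :=
  forall x y, S x -> S y ->
    (exists z, is_lub le S x y z) /\ (exists z, is_glb le S x y z).

(* Main.v *)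
Require Import Defs.
From mathcomp Require Import all_boot zify.
Set Implicit Arguments. Unset Strict Implicit. Unset Printing Implicit Defensive.

Lemma mono_gen (f : nat -> nat) : (forall i, f i <= f i.+1) -> forall i k, f i <= f (i + k).
Proof. move=> H i; elim=> [|k IH]; first by rewrite addn0. rewrite addnS; exact: leq_trans IH (H _). Qed.

Lemma lip_gen (f : nat -> nat) : (forall i, f i.+1 <= (f i).+1) -> forall i k, f (i + k) <= f i + k.
Proof. move=> H i; elim=> [|k IH]; first by rewrite !addn0. rewrite addnS; have := H (i + k); lia. Qed.

Lemma sq_gen (F : nat -> nat -> nat) :
  (forall i j, F i j.+1 + F i.+1 j <= F i j + F i.+1 j.+1) ->
  forall i j k l, F i (j + l) + F (i + k) j <= F i j + F (i + k) (j + l).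
Proof.
move=> H.
have col : forall i j k, F i j.+1 + F (i + k) j <= F i j + F (i + k) j.+1.
  move=> i j; elim=> [|k IH]; first by rewrite addn0; lia.
  have := H (i + k) j; rewrite addnS; lia.
move=> i j k; elim=> [|l IH]; first by rewrite addn0; lia.
have := col i (j + l) k; rewrite addnS; lia.
Qed.

Lemma ord0E n (i : 'I_n.+1) : val i == 0 -> i = ord0.
Proof. by move=> /eqP e; apply/val_inj. Qed.
Lemma ordmaxE n (i : 'I_n.+1) : val i == n -> i = ord_max.
Proof. by move=> /eqP e; apply/val_inj. Qed.

Lemma Qset_char n (Q : dmap n) : boundary Q ->
  (forall i i' j : 'I_n.+1, i <= i' -> Q (i, j) <= Q (i', j) /\ Q (i', j) + i <= Q (i, j) + i') ->
  (forall i j j' : 'I_n.+1, j <= j' -> Q (i, j) <= Q (i, j') /\ Q (i, j') + j <= Q (i, j) + j') ->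
  discrete_quasi_copula Q.
Proof.
move=> [Hb Hb2] Hi Hj; split=> //.
- by move=> i i' j h; case: (Hi i i' j h).
- by move=> i j j' h; case: (Hj i j j' h).
move=> i i' j j' hi hj.
move: (Hb2 i) (Hb2 i') (Hb2 j) (Hb2 j') (Hi i i' j hi) (Hi i i' j' hi) (Hj i j j' hj) (Hj i' j j' hj)
   => [? ? ? ?] [? ? ? ?] [? ? ? ?] [? ? ? ?] [? ?] [? ?] [? ?] [? ?].
move: (ltn_ord i') (ltn_ord j') => ? ?.
move=> /or4P [] /orP [];
  [ move=> /ord0E ? | move=> /ordmaxE ? | move=> /ord0E ? | move=> /ordmaxE ?
  | move=> /ord0E ? | move=> /ordmaxE ? | move=> /ord0E ? | move=> /ordmaxE ? ];
  subst; simpl in *; lia.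
Qed.

Lemma irr_of n (Q : dmap n) : boundary Q -> irreducible Q.
Proof.
move=> [Hb Hb2]; split=> // k hk; exists (inord k), ord_max.
have [_ _ -> _] := Hb2 (inord k); exact: inordK.
Qed.

Lemma Qset_props n (Q : dmap n) : Qset Q ->
  boundary Q /\
  (forall i i' j : 'I_n.+1, i <= i' -> Q (i, j) <= Q (i', j) /\ Q (i', j) + i <= Q (i, j) + i') /\
  (forall i j j' : 'I_n.+1, j <= j' -> Q (i, j) <= Q (i, j') /\ Q (i, j') + j <= Q (i, j) + j').
Proof.
move=> [[[Hb Hb2] Hi Hj H3] _]; split; first by [].
split.
- move=> i i' j h; split; first exact: Hi.
  have := H3 i i' j ord_max h (leq_ord _).
  have [_ _ -> _] := Hb2 i; have [_ _ -> _] := Hb2 i'.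
  rewrite /is_border /= eqxx !orbT => /(_ isT); lia.
- move=> i j j' h; split; first exact: Hj.
  have := H3 i ord_max j j' (leq_ord _) h.
  have [_ _ _ ->] := Hb2 j; have [_ _ _ ->] := Hb2 j'.
  rewrite /is_border /= eqxx !orbT => /(_ isT); lia.
Qed.

Lemma Qset_op n (op : nat -> nat -> nat) (x y : dmap n) :
  (forall a, op a a = a) ->
  (forall a b c d, a <= c -> b <= d -> op a b <= op c d) ->
  (forall a b c d k, a <= c + k -> b <= d + k -> op a b <= op c d + k) ->
  (forall a b, op a b <= maxn a b) ->
  Qset x -> Qset y -> Qset [ffun p => op (x p) (y p)].
Proof.
move=> Hid Hmo Hk Hmx Sx Sy.
have [[bx1 bx2] [ix jx]] := Qset_props Sx; have [[by1 by2] [iy jy]] := Qset_props Sy.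
have bm : boundary [ffun p => op (x p) (y p)].
  split.
  - move=> i j; rewrite ffunE; apply: leq_trans (Hmx _ _) _; rewrite geq_max bx1 by1 //.
  - move=> i; rewrite !ffunE; move: (bx2 i) (by2 i) => [-> -> -> ->] [-> -> -> ->].
    by split; rewrite Hid.
split; last exact: irr_of.
apply: Qset_char => //.
- move=> i i' j h; rewrite !ffunE; have [a1 a2] := ix i i' j h; have [b1 b2] := iy i i' j h.
  split; first exact: Hmo.
  have e : forall a c, a + i <= c + i' -> a <= c + (i' - i) by move=> *; lia.
  have := Hk _ _ _ _ (i' - i) (e _ _ a2) (e _ _ b2).
  lia.
- move=> i j j' h; rewrite !ffunE; have [a1 a2] := jx i j j' h; have [b1 b2] := jy i j j' h.
  split; first exact: Hmo.
  have e : forall a c, a + j <= c + j' -> a <= c + (j' - j) by move=> *; lia.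
  have := Hk _ _ _ _ (j' - j) (e _ _ a2) (e _ _ b2).
  lia.
Qed.

Lemma part1 n : is_lattice (@dle n) (@Qset n).
Proof.
move=> x y Sx Sy; split.
- exists [ffun p => maxn (x p) (y p)]; split.
  + apply: Qset_op => // *; lia.
  + by move=> i j; rewrite ffunE leq_maxl.
  + by move=> i j; rewrite ffunE leq_maxr.
  + by move=> w _ hx hy i j; rewrite ffunE geq_max hx hy.
- exists [ffun p => minn (x p) (y p)]; split.
  + apply: Qset_op => // *; lia.
  + by move=> i j; rewrite ffunE geq_minl.
  + by move=> i j; rewrite ffunE geq_minr.
  + by move=> w _ hx hy i j; rewrite ffunE leq_min hx hy.
Qed.

Definition ext b (t : nat -> nat -> nat) i j :=
  if i < b then if j < b then t i j else minn i j else minn i j.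
Definition patch n b t : dmap n := [ffun p : 'I_n.+1 * 'I_n.+1 => ext b t p.1 p.2].
Definition tab (s : seq (seq nat)) i j := nth 0 (nth [::] s i) j.
Definition allb b (P : nat -> nat -> bool) :=
  all (fun i => all (P i) (iota 0 b)) (iota 0 b).
Definition chk b t := allb b.+1 (fun i j =>
  [&& (i < b) ==> (ext b t i j <= ext b t i.+1 j <= (ext b t i j).+1),
      (j < b) ==> (ext b t i j <= ext b t i j.+1 <= (ext b t i j).+1),
      ext b t 0 j == 0 & ext b t i 0 == 0]).
Definition sqchk b t := allb b (fun i j =>
  ext b t i j.+1 + ext b t i.+1 j <= ext b t i j + ext b t i.+1 j.+1).

Lemma allbP b P : allb b P -> forall i j, i < b -> j < b -> P i j.
Proof.
move=> /allP H i j hi hj; have hi' : i \in iota 0 b by rewrite mem_iota.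
have /allP := H i hi'; by apply; rewrite mem_iota.
Qed.

Ltac ex := rewrite /ext; repeat (case: ifP => ?); try lia.


Lemma stepi (b : nat) (t : nat -> nat -> nat) : chk b t -> forall i j, ext b t i j <= ext b t i.+1 j /\ ext b t i.+1 j <= (ext b t i j).+1.
Proof.
move=> H i j; case: (ltnP i b) => hi; last by ex.
case: (leqP j b) => hj; last by ex.
have := allbP H (ltnW hi) hj => /and4P [/implyP/(_ hi)/andP [h1 h2] _ _ _]; by split.
Qed.

Lemma stepj (b : nat) (t : nat -> nat -> nat) : chk b t -> forall i j, ext b t i j <= ext b t i j.+1 /\ ext b t i j.+1 <= (ext b t i j).+1.
Proof.
move=> H i j; case: (ltnP j b) => hj; last by ex.
case: (leqP i b) => hi; last by ex.
have := allbP H hi (ltnW hj) => /and4P [_ /implyP/(_ hj)/andP [h1 h2] _ _]; by split.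
Qed.

Lemma zeros (b : nat) (t : nat -> nat -> nat) : chk b t -> forall x, ext b t 0 x = 0 /\ ext b t x 0 = 0.
Proof.
move=> H x; case: (leqP x b) => hx.
  have := allbP H (ltn0Sn b) hx => /and4P [_ _ /eqP h1 _].
  have := allbP H hx (ltn0Sn b) => /and4P [_ _ _ /eqP h2]. by [].
by split; ex.
Qed.

Lemma ext_big (b : nat) (t : nat -> nat -> nat) n x : b <= n -> x <= n -> ext b t n x = x /\ ext b t x n = x.
Proof. by move=> *; split; ex. Qed.

Lemma sqs (b : nat) (t : nat -> nat -> nat) : sqchk b t -> forall i j, ext b t i j.+1 + ext b t i.+1 j <= ext b t i j + ext b t i.+1 j.+1.
Proof.
move=> H i j; case: (ltnP i b) => hi; last by ex.
case: (ltnP j b) => hj; last by ex.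
by have := allbP H hi hj.
Qed.

Lemma ext_monoi (b : nat) (t : nat -> nat -> nat) : chk b t -> forall i i' j, i <= i' ->
  ext b t i j <= ext b t i' j /\ ext b t i' j + i <= ext b t i j + i'.
Proof.
move=> H i i' j h; rewrite -(subnKC h).
have := mono_gen (f := fun x => ext b t x j) (fun x => proj1 (stepi H x j)) i (i' - i).
have := lip_gen (f := fun x => ext b t x j) (fun x => proj2 (stepi H x j)) i (i' - i).
move=> /= *; lia.
Qed.

Lemma ext_monoj (b : nat) (t : nat -> nat -> nat) : chk b t -> forall i j j', j <= j' ->
  ext b t i j <= ext b t i j' /\ ext b t i j' + j <= ext b t i j + j'.
Proof.
move=> H i j j' h; rewrite -(subnKC h).
have := mono_gen (f := fun x => ext b t i x) (fun x => proj1 (stepj H i x)) j (j' - j).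
have := lip_gen (f := fun x => ext b t i x) (fun x => proj2 (stepj H i x)) j (j' - j).
move=> /= *; lia.
Qed.

Lemma bd_patch (b : nat) (t : nat -> nat -> nat) n : b <= n -> chk b t -> boundary (patch n b t).
Proof.
move=> hb H; split.
- move=> i j; rewrite ffunE /=.
  have [h1 _] := ext_monoi H j (leq_ord i).
  have [e _] := ext_big t hb (leq_ord j); rewrite e in h1.
  exact: leq_trans h1 (leq_ord j).
- move=> i; rewrite !ffunE /=.
  have [h1 h2] := zeros H i; have [h3 h4] := ext_big t hb (leq_ord i).
  by split.
Qed.

Lemma Qset_patch (b : nat) (t : nat -> nat -> nat) n : b <= n -> chk b t -> Qset (patch n b t).
Proof.
move=> hb H; split; last exact/irr_of/bd_patch.
apply: Qset_char; first exact: bd_patch.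
- by move=> i i' j h; rewrite !ffunE /=; apply: ext_monoi.
- by move=> i j j' h; rewrite !ffunE /=; apply: ext_monoj.
Qed.

Lemma Pset_patch (b : nat) (t : nat -> nat -> nat) n : b <= n -> chk b t -> sqchk b t -> Pset (patch n b t).
Proof.
move=> hb H Hs; split; last exact/irr_of/bd_patch.
split; first exact: bd_patch.
move=> i i' j j' hi hj; rewrite !ffunE /=.
have := sq_gen (sqs Hs) i j (i' - i) (j' - j).
by rewrite !subnKC.
Qed.


Lemma notPset_patch n b t i j : i < n -> j < n ->
  ext b t i j + ext b t i.+1 j.+1 < ext b t i j.+1 + ext b t i.+1 j ->
  ~ Pset (patch n b t).
Proof.
move=> hi hj hlt [[_ H] _].
have e1 : nat_of_ord (inord i : 'I_n.+1) = i by rewrite inordK //; lia.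
have e2 : nat_of_ord (inord i.+1 : 'I_n.+1) = i.+1 by rewrite inordK //; lia.
have e3 : nat_of_ord (inord j : 'I_n.+1) = j by rewrite inordK //; lia.
have e4 : nat_of_ord (inord j.+1 : 'I_n.+1) = j.+1 by rewrite inordK //; lia.
have := H (inord i) (inord i.+1) (inord j) (inord j.+1).
rewrite !ffunE /= !(e1, e2, e3, e4) => /(_ (leqnSn _) (leqnSn _)); lia.
Qed.

Lemma le_patch n b t1 t2 : allb b (fun i j => t1 i j <= t2 i j) ->
  dle (patch n b t1) (patch n b t2).
Proof.
move=> H i j; rewrite !ffunE /=; unfold ext.
case: ifP => hi; last by []. case: ifP => hj; last by []. by have := allbP H hi hj.
Qed.

Lemma pin n b t1 t2 t3 t4 t5 (z : dmap n) :
  allb b (fun i j => (t5 i j <= maxn (t1 i j) (t2 i j)) && (minn (t3 i j) (t4 i j) <= t5 i j)) ->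
  dle (patch n b t1) z -> dle (patch n b t2) z -> dle z (patch n b t3) -> dle z (patch n b t4) ->
  z = patch n b t5.
Proof.
move=> H h1 h2 h3 h4; apply/ffunP => -[i j].
move: (h1 i j) (h2 i j) (h3 i j) (h4 i j); rewrite !ffunE /=; unfold ext.
case: ifP => hi; last lia. case: ifP => hj; last lia.
have /andP := allbP H hi hj; lia.
Qed.

Definition ts1 := tab [:: [::0;0;0]; [::0;0;1]; [::0;1;2]].
Definition ts2 := tab [:: [::0;0;0]; [::0;1;1]; [::0;1;1]].
Definition tl1 := tab [:: [::0;0;0]; [::0;0;1]; [::0;0;1]].
Definition tl2 := tab [:: [::0;0;0]; [::0;0;0]; [::0;1;1]].
Definition tasm := tab [:: [::0;0;0]; [::0;0;1]; [::0;1;1]].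

Lemma part2 n : 3 <= n -> ~ is_lattice (@dle n) (@Pset n).
Proof.
move=> hn H.
have P1 : Pset (patch n 3 ts1) by apply: Pset_patch.
have P2 : Pset (patch n 3 ts2) by apply: Pset_patch.
have L1 : Pset (patch n 3 tl1) by apply: Pset_patch.
have L2 : Pset (patch n 3 tl2) by apply: Pset_patch.
have [_ [z [Sz hz1 hz2 hmax]]] := H _ _ P1 P2.
have h1 := hmax _ L1 (@le_patch n 3 tl1 ts1 isT) (@le_patch n 3 tl1 ts2 isT).
have h2 := hmax _ L2 (@le_patch n 3 tl2 ts1 isT) (@le_patch n 3 tl2 ts2 isT).
have ez : z = patch n 3 tasm.
  by apply: (pin (t1 := tl1) (t2 := tl2) (t3 := ts1) (t4 := ts2)).
rewrite ez in Sz.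
by apply: (@notPset_patch n 3 tasm 1 1) Sz; [lia | lia | ].
Qed.

Definition tx := tab [:: [::0;0;0;0]; [::0;0;0;1]; [::0;0;1;1]; [::0;1;2;2]].
Definition ty := tab [:: [::0;0;0;0]; [::0;0;1;1]; [::0;0;1;1]; [::0;1;1;2]].
Definition tu1 := tab [:: [::0;0;0;0]; [::0;0;1;1]; [::0;0;1;2]; [::0;1;2;2]].
Definition tu2 := tab [:: [::0;0;0;0]; [::0;0;1;1]; [::0;1;1;1]; [::0;1;2;2]].
Definition tm := tab [:: [::0;0;0;0]; [::0;0;1;1]; [::0;0;1;1]; [::0;1;2;2]].

Lemma part3 n : 4 <= n ->
  ~ is_lattice (@dle n) (fun Q : dmap n => Qset Q /\ ~ Pset Q).
Proof.
move=> hn H.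
have Sx : Qset (patch n 4 tx) /\ ~ Pset (patch n 4 tx).
  split; first by apply: Qset_patch.
  by apply: (@notPset_patch n 4 tx 1 2); [lia | lia | ].
have Sy : Qset (patch n 4 ty) /\ ~ Pset (patch n 4 ty).
  split; first by apply: Qset_patch.
  by apply: (@notPset_patch n 4 ty 2 1); [lia | lia | ].
have S1 : Qset (patch n 4 tu1) /\ ~ Pset (patch n 4 tu1).
  split; first by apply: Qset_patch.
  by apply: (@notPset_patch n 4 tu1 2 2); [lia | lia | ].
have S2 : Qset (patch n 4 tu2) /\ ~ Pset (patch n 4 tu2).
  split; first by apply: Qset_patch.
  by apply: (@notPset_patch n 4 tu2 1 1); [lia | lia | ].
have [[z [[Sz nPz] hz1 hz2 hmin]] _] := H _ _ Sx Sy.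
have h1 := hmin _ S1 (@le_patch n 4 tx tu1 isT) (@le_patch n 4 ty tu1 isT).
have h2 := hmin _ S2 (@le_patch n 4 tx tu2 isT) (@le_patch n 4 ty tu2 isT).
have ez : z = patch n 4 tm.
  by apply: (pin (t1 := tx) (t2 := ty) (t3 := tu1) (t4 := tu2)).
apply: nPz; rewrite ez; apply: Pset_patch => //.
Qed.

Theorem theorem2 :
  (forall n : nat, 1 <= n -> is_lattice (@dle n) (@Qset n)) /\
  (forall n : nat, 3 <= n -> ~ is_lattice (@dle n) (@Pset n)) /\
  (forall n : nat, 4 <= n ->
     ~ is_lattice (@dle n) (fun Q : dmap n => Qset Q /\ ~ Pset Q)).
Proof.
split; first by move=> n _; exact: part1.
split; [exact: part2 | exact: part3].
Qed.
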